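(* For every hypergraph $\mathcal{H}$: (a) $\operatorname{coind}(B_0(\operatorname{KG}(\mathcal{H})))\geq \dim(\mathcal{H})\geq |V(\mathcal{H})|-\operatorname{alt}(\mathcal{H})-1$; (b) $\operatorname{coind}(B(\operatorname{KG}(\mathcal{H})))\geq \operatorname{sdim}(\mathcal{H})\geq |V(\mathcal{H})|-\operatorname{salt}(\mathcal{H})-1$.
   Context: A hypergraph $\mathcal{H}=(V,E)$ consists of a finite nonempty vertex set $V$ and a family $E$ of distinct nonempty subsets of $V$; $\mathcal{H}[U]$ is the induced subhypergraph on $U\subseteq V$ with edges $\{e\in E:e\subseteq U\}$. $\operatorname{KG}(\mathcal{H})$ is the graph with vertex set $E$ in which two edges are adjacent iff disjoint. $S^d\subset\mathbb{R}^{d+1}$ is the unit sphere ($S^{-1}=\varnothing$), $H(x)=\{y\in S^d:\langle x,y\rangle>0\}$. $\dim(\mathcal{H})$ (resp. $\operatorname{sdim}(\mathcal{H})$) is the maximum integer $d\geq-1$ for which there is a map $\varphi:V\to S^d$ such that for every $x\in S^d$, at least one of (resp. both of) $H(x)$ and $H(-x)$ contains $\varphi(e)$ for some edge $e\in E$. Let $n=|V|$. For $X\in\{+,-,0\}^n$, $\operatorname{alt}(X)$ is the maximum length of a subsequence of nonzero terms of $X$ with consecutive terms of different signs ($\operatorname{alt}(0,\dots,0)=0$); $X^\pm=\{j:x_j=\pm\}$. For a bijection $\sigma:[n]\to V$, $\operatorname{alt}(\mathcal{H},\sigma)=\max\{\operatorname{alt}(X):\max(|E(\mathcal{H}[\sigma(X^+)])|,|E(\mathcal{H}[\sigma(X^-)])|)=0\}$,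 $\operatorname{salt}(\mathcal{H},\sigma)=\max\{\operatorname{alt}(X):\min(|E(\mathcal{H}[\sigma(X^+)])|,|E(\mathcal{H}[\sigma(X^-)])|)=0\}$; $\operatorname{alt}(\mathcal{H})$, $\operatorname{salt}(\mathcal{H})$ are the minima of these over all bijections $\sigma$. For a graph $G$ and $A\subseteq V(G)$, $\operatorname{CN}(A)=\{v: av\in E(G)\ \forall a\in A\}$. $B_0(G)$ is the simplicial complex on $V(G)\times\{1,2\}$ with simplices $(A\times\{1\})\cup(B\times\{2\})$ for disjoint $A,B\subseteq V(G)$ with every vertex of $A$ adjacent to every vertex of $B$; $B(G)$ is the subcomplex of those simplices with additionally $\operatorname{CN}(A)\neq\varnothing\neq\operatorname{CN}(B)$. Both have the free involution $(v,1)\leftrightarrow(v,2)$. $\operatorname{coind}(T)$ of a free $\mathbb{Z}_2$-space $T$ is the maximum $d\geq0$ admitting a continuous equivariant map $S^d\to T$ (antipodal map on $S^d$); coind of a complex refers to its geometric realization. *)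

(* Defs.v *)
From HB Require Import structures.
From mathcomp Require Import all_boot all_order all_algebra.
From mathcomp Require Import all_classical all_reals all_analysis.
Set Implicit Arguments. Unset Strict Implicit. Unset Printing Implicit Defensive.
Import Order.TTheory GRing.Theory Num.Theory.
Import numFieldNormedType.Exports.
Local Open Scope classical_set_scope.
Local Open Scope ring_scope.

(* S^d = unit sphere of R^(d+1), represented as row vectors 'rV[R]_d.+1, d >= 0.
   (S^{-1} = empty is treated separately where needed.) *)
Definition inner (R : realType) (k : nat) (x y : 'rV[R]_k) : R :=
  \sum_(i < k) x ord0 i * y ord0 i.

Definition sphere (R : realType) (d : nat) : set 'rV[R]_d.+1 :=
  [set x | inner x x = 1].

Definition hemi (R : realType) (k : nat) (x y : 'rV[R]_k) : Prop := 0 < inner x y.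

Local Close Scope classical_set_scope.

Definition hits (R : realType) (V : finType) (E : {set {set V}}) (d : nat)
  (phi : V -> 'rV[R]_d.+1) (x : 'rV[R]_d.+1) : Prop :=
  exists2 e, e \in E & forall v, v \in e -> hemi x (phi v).

Definition dim_admissible (R : realType) (V : finType) (E : {set {set V}}) (d : nat) : Prop :=
  exists phi : V -> 'rV[R]_d.+1,
    (forall v, @sphere R d (phi v)) /\
    (forall x, @sphere R d x -> hits E phi x \/ hits E phi (- x)).

Definition sdim_admissible (R : realType) (V : finType) (E : {set {set V}}) (d : nat) : Prop :=
  exists phi : V -> 'rV[R]_d.+1,
    (forall v, @sphere R d (phi v)) /\
    (forall x, @sphere R d x -> hits E phi x /\ hits E phi (- x)).
(* d = -1 is always admissible (S^{-1} is empty), so dim, sdim >= -1. *)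

(* sign vectors X in {+,-,0}^n : Some true = +, Some false = -, None = 0 *)
Definition signvec (n : nat) := {ffun 'I_n -> option bool}.

Definition alternating (s : seq (option bool)) : bool :=
  all (fun o => o != None) s && sorted (fun a b => a != b) s.

Definition altX (n : nat) (X : signvec n) : nat :=
  \max_(m : {ffun 'I_n -> bool})
     (let s := [seq X i | i <- enum 'I_n & m i] in
      if alternating s then size s else 0%N).

Definition Xplus (n : nat) (X : signvec n) : {set 'I_n} := [set j | X j == Some true].
Definition Xminus (n : nat) (X : signvec n) : {set 'I_n} := [set j | X j == Some false].

Definition induced_edges (V : finType) (E : {set {set V}}) (U : {set V}) : {set {set V}} :=
  [set e in E | e \subset U].

Definition ordering (V : finType) := {ffun 'I_#|V| -> V}.

Definition alt_sigma (V : finType) (E : {set {set V}}) (s : ordering V) : nat :=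
  \max_(X : signvec #|V| |
        maxn #|induced_edges E (s @: Xplus X)| #|induced_edges E (s @: Xminus X)| == 0%N)
     altX X.

Definition salt_sigma (V : finType) (E : {set {set V}}) (s : ordering V) : nat :=
  \max_(X : signvec #|V| |
        minn #|induced_edges E (s @: Xplus X)| #|induced_edges E (s @: Xminus X)| == 0%N)
     altX X.

(* minimum over all bijections (the neutral element #|V| is an upper bound of
   alt(H,sigma), and bijections exist, so it does not affect the value) *)
Definition alt (V : finType) (E : {set {set V}}) : nat :=
  \big[minn/#|V|]_(s : ordering V | injectiveb s) alt_sigma E s.

Definition salt (V : finType) (E : {set {set V}}) : nat :=
  \big[minn/#|V|]_(s : ordering V | injectiveb s) salt_sigma E s.

Definition KGvert (V : finType) (E : {set {set V}}) := {e : {set V} | e \in E}.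

Definition KGadj (V : finType) (E : {set {set V}}) : rel (KGvert E) :=
  fun a b => [disjoint val a & val b].

(* (v, true) stands for (v,1), (v, false) for (v,2) *)
Definition part1 (T : finType) (S : {set T * bool}) : {set T} := [set v | (v, true) \in S].
Definition part2 (T : finType) (S : {set T * bool}) : {set T} := [set v | (v, false) \in S].

Definition CN (T : finType) (adj : rel T) (A : {set T}) : {set T} :=
  [set v | [forall a in A, adj a v]].

Definition B0 (T : finType) (adj : rel T) (S : {set T * bool}) : bool :=
  [disjoint part1 S & part2 S] &&
  [forall a in part1 S, forall b in part2 S, adj a b].

Definition Bc (T : finType) (adj : rel T) (S : {set T * bool}) : bool :=
  B0 adj S && (CN adj (part1 S) != finset.set0) && (CN adj (part2 S) != finset.set0).

Definition swap (T : finType) (w : T * bool) : T * bool := (w.1, ~~ w.2).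

(* geometric realization of a simplicial complex K on a finite vertex set W,
   as points of R^W with barycentric coordinates *)
Definition realization (R : realType) (W : finType) (K : pred {set W}) : set (W -> R) :=
  [set t | (forall w, 0 <= t w) /\ \sum_(w : W) t w = 1 /\ K [set w | t w != 0]%SET]%classic.

Local Open Scope classical_set_scope.

Definition equivariant_map (R : realType) (T : finType) (K : pred {set T * bool}) (d : nat)
  (f : 'rV[R]_d.+1 -> (T * bool -> R)) : Prop :=
  (forall x, @sphere R d x -> @realization R _ K (f x)) /\
  (forall x, @sphere R d x -> f (- x) = (fun w => f x (swap w))) /\
  (forall w, {within @sphere R d, continuous (fun x => f x w)}).

(* coind(|K|) >= d  (d >= 0), coind being the maximum d' admitting such a map *)
Definition coind_ge (R : realType) (T : finType) (K : pred {set T * bool}) (d : nat) : Prop :=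
  exists d' : nat, (d <= d')%N /\ exists f, @equivariant_map R T K d' f.

(* Main.v *)
Require Import Defs.
From HB Require Import structures.
From mathcomp Require Import all_boot all_order all_algebra.
From mathcomp Require Import all_classical all_reals all_analysis.
From mathcomp Require Import ring lra zify.
From Stdlib Require Classical_Prop.
Set Implicit Arguments. Unset Strict Implicit. Unset Printing Implicit Defensive.
Import Order.TTheory GRing.Theory Num.Theory.
Import numFieldNormedType.Exports.
Local Open Scope ring_scope.

Section Alt.
Variable R : rcfType.

Fixpoint altp (t : nat -> R) (a : nat) (L : seq nat) : bool :=
  match L with
  | [::] => true
  | b :: L' => [&& (a < b)%N, t a * t b < 0 & altp t b L']
  end.

Definition altl (t : nat -> R) (L : seq nat) : bool :=
  match L with [::] => true | a :: L' => (t a != 0) && altp t a L' end.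

Fixpoint Fr (r : R) (L : seq nat) : seq nat :=
  match L with
  | [::] => [::]
  | a :: L' => if a%:R < r then a :: Fr r L' else L'
  end.

Lemma Fr_size r L : (size L <= (size (Fr r L)).+1)%N.
Proof. elim: L => //= a L IH; case: ifP => //= _; exact: leqnSn. Qed.

Lemma Fr_sub r L : {subset Fr r L <= L}.
Proof.
elim: L => //= a L IH x; case: ifP => _; last by rewrite inE => ->; rewrite orbT.
by rewrite !inE => /orP[->//|/IH ->]; rewrite orbT.
Qed.

Lemma altp_all_gt t a L : altp t a L -> all (fun i => a < i)%N L.
Proof.
elim: L a => //= b L IH a /and3P[ab _ /IH H].
rewrite ab /=; apply/allP => i /(allP H); exact: ltn_trans.
Qed.

Lemma altp_pos (t t' : nat -> R) r a L :
  (forall i, t i = t' i * (i%:R - r)) -> r < a%:R ->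
  altp t' a L -> altp t a L.
Proof.
move=> Ht; elim: L a => //= b L IH a ra /and3P[ab tab H].
have rb : r < b%:R by apply: lt_le_trans ra _; rewrite ler_nat ltnW.
rewrite ab /= IH // andbT !Ht.
have -> : t' a * (a%:R - r) * (t' b * (b%:R - r)) =
   (t' a * t' b) * ((a%:R - r) * (b%:R - r)) by ring.
by rewrite pmulr_llt0 // mulr_gt0 // subr_gt0.
Qed.

Lemma Fr_alt (t t' : nat -> R) r a L :
  (forall i, t i = t' i * (i%:R - r)) -> altl t' (a :: L) -> altl t (Fr r (a :: L)).
Proof.
move=> Ht; elim: L a => [|b L IH] a /= /andP[ta H].
  by case: ifP => // ar; rewrite /= Ht mulf_neq0 // subr_eq0 lt_eqF.
case/and3P: H => ab tab H.
have tb : t' b != 0 by apply: contraTneq tab => ->; rewrite mulr0 ltxx.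
case: ifP => ar.
  have ta0 : t a != 0 by rewrite Ht mulf_neq0 // subr_eq0 lt_eqF.
  apply/andP; split=> //.
  have := IH b; rewrite /= tb H => /(_ isT).
  case: ifP => br.
    move=> /andP[_ Hb]; rewrite /= ab Hb andbT !Ht.
    have -> : t' a * (a%:R - r) * (t' b * (b%:R - r)) =
       (t' a * t' b) * ((r - a%:R) * (r - b%:R)) by ring.
    by rewrite nmulr_rlt0 // mulr_gt0 // subr_gt0.
  move=> _; case: L H IH => //= c L /and3P[bc tbc H] _.
  have rb : r <= b%:R by rewrite leNgt br.
  have rc : r < c%:R by apply: le_lt_trans rb _; rewrite ltr_nat.
  rewrite (ltn_trans ab bc) /= (altp_pos Ht rc H) andbT !Ht.
  have tac : 0 < t' a * t' c.
    have : 0 < (t' a * t' b) * (t' b * t' c) by rewrite nmulr_rgt0.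
    have -> : (t' a * t' b) * (t' b * t' c) = (t' a * t' c) * (t' b * t' b) by ring.
    by rewrite pmulr_lgt0 // lt_def mulf_neq0 //= -expr2 sqr_ge0.
  have -> : t' a * (a%:R - r) * (t' c * (c%:R - r)) =
       (t' a * t' c) * ((a%:R - r) * (c%:R - r)) by ring.
  by rewrite pmulr_rlt0 // nmulr_rlt0 ?subr_lt0 ?subr_gt0.
have rb : r < b%:R by apply: le_lt_trans (_ : a%:R < _); rewrite ?leNgt ?ar ?ltr_nat.
by rewrite /= Ht mulf_neq0 // ?(altp_pos Ht rb H) // subr_eq0 gt_eqF.
Qed.

Lemma Fr_altl (t t' : nat -> R) r L :
  (forall i, t i = t' i * (i%:R - r)) -> altl t' L -> altl t (Fr r L).
Proof. by case: L => // a L; exact: Fr_alt. Qed.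

Definition tp (p : {poly R}) (i : nat) : R := (-1) ^+ i * p.[i%:R].

Lemma noroot_alt (p : {poly R}) : (forall r, ~~ root p r) ->
  forall i, tp p i * tp p i.+1 < 0.
Proof.
move=> Hr i.
have H0 : forall x, p.[x] != 0 by move=> x; have := Hr x; rewrite /root.
have -> : tp p i * tp p i.+1 = - (p.[i%:R] * p.[i.+1%:R]).
  have e : (-1) ^+ i * (-1) ^+ i = 1 :> R.
    by rewrite -exprD addnn -muln2 exprM sqrr_sign.
  transitivity (- ((-1) ^+ i * (-1) ^+ i) * (p.[i%:R] * p.[i.+1%:R])).
    by rewrite /tp exprS; ring.
  by rewrite e mulN1r.
rewrite oppr_lt0.
have lei : (i%:R : R) <= i.+1%:R by rewrite ler_nat.
case: (ltrgt0P p.[i%:R]) => [pos|neg|/eqP]; last by rewrite (negbTE (H0 _)).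
- case: (ltrgt0P p.[i.+1%:R]) => [pos'|neg'|/eqP]; last by rewrite (negbTE (H0 _)).
  + exact: mulr_gt0.
  + have [|x _ rx] := @poly_ivt R (- p) _ _ lei; first by rewrite !hornerN oppr_le0 oppr_ge0 !ltW.
    by move: (Hr x) rx; rewrite /root hornerN oppr_eq0 => /negbTE ->.
- case: (ltrgt0P p.[i.+1%:R]) => [pos'|neg'|/eqP]; last by rewrite (negbTE (H0 _)).
  + have [|x _ rx] := @poly_ivt R p _ _ lei; first by rewrite !ltW.
    by move: (Hr x); rewrite rx.
  + by rewrite nmulr_rgt0.
Qed.

Lemma iota_alt (t : nat -> R) : (forall i, t i * t i.+1 < 0) ->
  forall m a, altp t a (iota a.+1 m).
Proof.
move=> Ht; elim=> // m IH a /=; by rewrite ltnSn Ht IH.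
Qed.

Lemma poly_alt n k (p : {poly R}) : (size p <= k)%N -> p != 0 ->
  exists L, [&& altl (tp p) L, all (fun i => i < n)%N L & (n <= size L + (size p).-1)%N].
Proof.
elim: k p => [|k IH] p.
  by rewrite leqn0 size_poly_eq0 => /eqP ->; rewrite eqxx.
move=> sp p0.
case: (Classical_Prop.classic (exists r, root p r)) => [[r /factor_theorem [q pq]]|nr].
  have q0 : q != 0 by apply: contra p0; rewrite pq => /eqP ->; rewrite mul0r.
  have spq : size p = (size q).+1.
    by rewrite pq size_mul // ?size_XsubC ?addn2 // -size_poly_eq0 size_XsubC.
  have [|L' /and3P[a1 a2 a3]] := IH q _ q0; first by rewrite -ltnS -spq.
  exists (Fr r L'); apply/and3P; split.
  - apply: Fr_altl a1 => i; rewrite /tp pq hornerM hornerXsubC; ring.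
  - by apply/allP => i /Fr_sub /(allP a2).
  - apply: (leq_trans a3); rewrite spq /=.
    have := Fr_size r L'; have : (0 < size q)%N by rewrite size_poly_gt0.
    move=> sq h; rewrite -(prednK sq) addnS -addSn leq_add2r; exact: h.
have nr' : forall r, ~~ root p r by move=> r; apply/negP => h; apply: nr; exists r.
exists (iota 0 n); apply/and3P; split.
- move: IH => _; case: n => //= n; rewrite iota_alt ?andbT; last exact: noroot_alt.
  by rewrite /tp expr0 mul1r; have := nr' 0; rewrite /root.
- by apply/allP => i; rewrite mem_iota.
- by rewrite size_iota leq_addr.
Qed.
End Alt.

Section Cont.
Variables (R : realType) (T : topologicalType).

Lemma cont_add (f g : T -> R) : continuous f -> continuous g ->
  continuous (fun x => f x + g x).
Proof. move=> cf cg x. have := continuousD (cf x) (cg x). exact. Qed.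

Lemma cont_mul (f g : T -> R) : continuous f -> continuous g ->
  continuous (fun x => f x * g x).
Proof. move=> cf cg x. have := continuousM (cf x) (cg x). exact. Qed.

Lemma cont_cst (c : R) : continuous (fun _ : T => c).
Proof. exact: cst_continuous. Qed.

Lemma cont_norm (f : T -> R) : continuous f -> continuous (fun x => `|f x|).
Proof. by move=> cf x; apply: (continuous_comp (cf x)); apply: norm_continuous. Qed.

Lemma cont_inv (f : T -> R) : (forall x, f x != 0) -> continuous f ->
  continuous (fun x => (f x)^-1).
Proof. move=> nz cf x. have := continuousV (nz x) (cf x). exact. Qed.

Lemma cont_sum (I : Type) (r : seq I) (P : pred I) (F : I -> T -> R) :
  (forall i, continuous (F i)) -> continuous (fun x => \sum_(i <- r | P i) F i x).
Proof.
move=> HF; elim: r => [|a r IH].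
  rewrite (_ : (fun x => _) = fun=> 0); first exact: cont_cst.
  by apply: funext => x; rewrite big_nil.
rewrite (_ : (fun x => _) = fun x => (if P a then F a x else 0) + \sum_(i <- r | P i) F i x).
  apply: cont_add => //; case: (P a) => //; exact: cont_cst.
by apply: funext => x; rewrite big_cons; case: ifP; rewrite ?add0r.
Qed.

Lemma cont_prod (I : Type) (r : seq I) (P : pred I) (F : I -> T -> R) :
  (forall i, continuous (F i)) -> continuous (fun x => \prod_(i <- r | P i) F i x).
Proof.
move=> HF; elim: r => [|a r IH].
  rewrite (_ : (fun x => _) = fun=> 1); first exact: cont_cst.
  by apply: funext => x; rewrite big_nil.
rewrite (_ : (fun x => _) = fun x => (if P a then F a x else 1) * \prod_(i <- r | P i) F i x).
  apply: cont_mul => //; case: (P a) => //; exact: cont_cst.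
by apply: funext => x; rewrite big_cons; case: ifP; rewrite ?mul1r.
Qed.
End Cont.

Lemma cont_inner (R : realType) k (y : 'rV[R]_k) : continuous (fun x : 'rV[R]_k => inner x y).
Proof.
rewrite /inner; apply: cont_sum => i; apply: cont_mul; last exact: cont_cst.
exact: coord_continuous.
Qed.

Lemma cont_innerxx (R : realType) k : continuous (fun x : 'rV[R]_k => inner x x).
Proof.
rewrite /inner; apply: cont_sum => i; apply: cont_mul; exact: coord_continuous.
Qed.

Section MapA.
Variables (R : realType) (V : finType) (E : {set {set V}}) (d : nat).
Hypothesis HE : finset.set0 \notin E.
Variable phi : V -> 'rV[R]_d.+1.
Local Notation M := 'rV[R]_d.+1.
Local Notation W := (KGvert E * bool)%type.

Definition sg (b : bool) : R := if b then 1 else -1.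
Definition posp (a : R) : R := (a + `|a|) / 2.

Lemma posp_ge0 a : 0 <= posp a.
Proof. rewrite /posp; case: (lerP 0 a) => h; [rewrite ger0_norm // | rewrite ltr0_norm //]; lra. Qed.

Lemma posp_gt0 a : 0 < a -> 0 < posp a.
Proof. by move=> h; rewrite /posp ger0_norm ?ltW //; lra. Qed.

Lemma posp_neq0 a : posp a != 0 -> 0 < a.
Proof. by rewrite /posp; case: (lerP a 0) => h //; rewrite ler0_norm //; rewrite subrr mul0r eqxx. Qed.

Lemma inner_oppl k (x y : 'rV[R]_k) : inner (- x) y = - inner x y.
Proof. by rewrite /inner -sumrN; apply: eq_bigr => i _; rewrite mxE mulNr. Qed.

Lemma inner_oppr k (x y : 'rV[R]_k) : inner x (- y) = - inner x y.
Proof. by rewrite /inner -sumrN; apply: eq_bigr => i _; rewrite mxE mulrN. Qed.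

Definition G (x : M) (w : W) : R := \prod_(v in val w.1) posp (sg w.2 * inner x (phi v)).
Definition S (x : M) : R := \sum_(w : W) G x w.
Definition D (x : M) : R := S x + `|1 - inner x x|.
Definition fmapKG (x : M) (w : W) : R := G x w / D x.

Lemma G_ge0 x w : 0 <= G x w.
Proof. by apply: prodr_ge0 => v _; exact: posp_ge0. Qed.

Lemma S_ge0 x : 0 <= S x.
Proof. by apply: sumr_ge0 => w _; exact: G_ge0. Qed.

Lemma G_neq0 x w : G x w != 0 -> forall v, v \in val w.1 -> 0 < sg w.2 * inner x (phi v).
Proof.
rewrite /G => /prodf_neq0 H v hv.
by apply: posp_neq0; apply: H.
Qed.

Lemma G_gt0 x (w : W) : (forall v, v \in val w.1 -> 0 < sg w.2 * inner x (phi v)) -> 0 < G x w.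
Proof. by move=> H; apply: prodr_gt0 => v hv; apply: posp_gt0; apply: H. Qed.

Lemma swap_inj : injective (@swap (KGvert E)).
Proof. by move=> [a b] [c e]; rewrite /swap /= => -[-> /negb_inj ->]. Qed.

Lemma G_opp x w : G (- x) w = G x (swap w).
Proof.
rewrite /G /=; apply: eq_bigr => v _; congr posp.
by rewrite inner_oppl; case: w.2 => /=; rewrite /sg; ring.
Qed.

Lemma S_opp x : S (- x) = S x.
Proof.
rewrite /S (reindex_inj swap_inj) /=; apply: eq_bigr => w _.
by rewrite G_opp /swap /= negbK; case: w.
Qed.

Lemma D_opp x : D (- x) = D x.
Proof. by rewrite /D S_opp inner_oppl inner_oppr opprK. Qed.

Lemma key x (a b : KGvert E) : G x (a, true) != 0 -> G x (b, false) != 0 ->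
  [disjoint val a & val b].
Proof.
move=> ha hb; rewrite -setI_eq0; apply/eqP/setP => v; rewrite !inE; apply/negP => /andP[va vb].
have := G_neq0 ha va; have := G_neq0 hb vb; rewrite /sg /=; lra.
Qed.

Lemma nonempty_vert (a : KGvert E) : exists v, v \in val a.
Proof.
case: a => e he /=; case: (set_0Vmem e) => [e0|[v hv]]; [by move: HE; rewrite -e0 he | by exists v].
Qed.

Lemma cont_G w : continuous (fun x => G x w).
Proof.
rewrite /G; apply: cont_prod => v; rewrite /posp.
apply: cont_mul; last exact: cont_cst.
have ci : continuous (fun x : M => sg w.2 * inner x (phi v)).
  by apply: cont_mul; [exact: cont_cst | exact: cont_inner].
by apply: cont_add => //; apply: cont_norm.
Qed.

Lemma cont_D : continuous D.
Proof.
rewrite /D /S; apply: cont_add.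
  by apply: cont_sum => w; exact: cont_G.
apply: cont_norm; apply: cont_add; first exact: cont_cst.
have := @cont_innerxx R d.+1 => h x.
have := continuousN (h x); exact.
Qed.


Lemma hits_G x : hits E phi x -> exists a : KGvert E, 0 < G x (a, true).
Proof.
case=> e he H; exists (exist _ e he); apply: G_gt0 => v /= hv.
by rewrite mul1r; apply: H.
Qed.

Lemma hitsN_G x : hits E phi (- x) -> exists a : KGvert E, 0 < G x (a, false).
Proof.
case=> e he H; exists (exist _ e he); apply: G_gt0 => v /= hv.
by rewrite /sg mulN1r -inner_oppl; apply: H.
Qed.

Lemma S_pos x w : 0 < G x w -> 0 < S x.
Proof.
move=> h; rewrite /S (bigD1 w) //=.
have : 0 <= \sum_(i | i != w) G x i by apply: sumr_ge0 => i _; exact: G_ge0.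
lra.
Qed.

Lemma D_pos (HS : forall x, @sphere R d x -> 0 < S x) x : 0 < D x.
Proof.
rewrite /D; have := S_ge0 x; case: (eqVneq (inner x x) 1) => h.
  by rewrite h subrr normr0 addr0 => _; apply: HS.
have : 0 < `|1 - inner x x| by rewrite normr_gt0 subr_eq0 eq_sym.
lra.
Qed.

Lemma equiv_gen (K : pred {set (KGvert E * bool)})
  (HS : forall x, @sphere R d x -> 0 < S x)
  (HK : forall x, @sphere R d x -> K [set w | G x w != 0]%SET) :
  equivariant_map K fmapKG.
Proof.
have Dn0 x : D x != 0 by rewrite gt_eqF // D_pos.
split; [|split].
- move=> x sx; rewrite /realization /=; split; [|split].
  + by move=> w; rewrite /fmapKG divr_ge0 ?G_ge0 // ltW // D_pos.
  + rewrite /fmapKG -mulr_suml -/(S x) /D (_ : inner x x = 1) //.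
    by rewrite subrr normr0 addr0 divff // gt_eqF // HS.
  + rewrite (_ : [set w | fmapKG x w != 0]%SET = [set w | G x w != 0]%SET); first exact: HK.
    by apply/setP => w; rewrite !inE /fmapKG mulf_eq0 invr_eq0 (negbTE (Dn0 x)) orbF.
- move=> x _; apply: funext => w; by rewrite /fmapKG G_opp D_opp.
- move=> w; apply: continuous_subspaceT; rewrite /fmapKG.
  apply: cont_mul; first exact: cont_G.
  by apply: cont_inv => //; exact: cont_D.
Qed.

Lemma B0_supp x : B0 (@KGadj V E) [set w | G x w != 0]%SET.
Proof.
apply/andP; split.
  rewrite -setI_eq0; apply/eqP/setP => a; rewrite !inE; apply/negP => /andP[h1 h2].
  have := key h1 h2; case: (nonempty_vert a) => v hv.
  by rewrite -setI_eq0 => /eqP/setP/(_ v); rewrite !inE hv.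
apply/forallP => a; apply/implyP; rewrite !inE => ha.
apply/forallP => b; apply/implyP; rewrite !inE => hb.
exact: (key ha hb).
Qed.

Lemma equiv_B0 (H : forall x, @sphere R d x -> hits E phi x \/ hits E phi (- x)) :
  equivariant_map (B0 (@KGadj V E)) fmapKG.
Proof.
apply: equiv_gen; last by move=> x _; exact: B0_supp.
move=> x /H [/hits_G|/hitsN_G] [a ha]; exact: S_pos ha.
Qed.

Lemma equiv_Bc (H : forall x, @sphere R d x -> hits E phi x /\ hits E phi (- x)) :
  equivariant_map (Bc (@KGadj V E)) fmapKG.
Proof.
apply: equiv_gen.
  move=> x /H [/hits_G [a ha] _]; exact: S_pos ha.
move=> x /H [/hits_G [a ha] /hitsN_G [b hb]].
rewrite /Bc B0_supp /=; apply/andP; split.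
- apply/set0Pn; exists b; rewrite inE; apply/forallP => a'; apply/implyP; rewrite !inE => ha'.
  exact: (key ha' (negbT (gt_eqF hb))).
- apply/set0Pn; exists a; rewrite inE; apply/forallP => b'; apply/implyP; rewrite !inE => hb'.
  by rewrite /KGadj disjoint_sym; exact: (key (negbT (gt_eqF ha)) hb').
Qed.

End MapA.

Section Seqs.
Variable R : realType.

Lemma altp_props (t : nat -> R) a L : altp t a L ->
  [&& path ltn a L, path (fun i j => t i * t j < 0) a L & all (fun i => t i != 0) L].
Proof.
elim: L a => //= b L IH a /and3P[ab tab /IH /and3P[h1 h2 h3]].
rewrite ab tab h1 h2 h3 /= andbT.
by apply: contraTneq tab => ->; rewrite mulr0 ltxx.
Qed.

Lemma altl_props (t : nat -> R) L : altl t L ->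
  [&& sorted ltn L, sorted (fun i j => t i * t j < 0) L & all (fun i => t i != 0) L].
Proof.
case: L => //= a L /andP[ta /altp_props /and3P[h1 h2 h3]].
by rewrite h1 h2 ta h3.
Qed.

Lemma altp_scale (t : nat -> R) (c : nat -> R) a L : (forall i, 0 < c i) ->
  altp t a L -> altp (fun i => c i * t i) a L.
Proof.
move=> hc; elim: L a => //= b L IH a /and3P[ab tab /IH ->]; rewrite ab andbT.
have -> : c a * t a * (c b * t b) = (c a * c b) * (t a * t b) by ring.
by rewrite pmulr_rlt0 // mulr_gt0.
Qed.

Lemma altl_scale (t : nat -> R) (c : nat -> R) L : (forall i, 0 < c i) ->
  altl t L -> altl (fun i => c i * t i) L.
Proof.
move=> hc; case: L => //= a L /andP[ta h]; rewrite mulf_neq0 ?(gt_eqF (hc a)) //=.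
exact: altp_scale.
Qed.

Definition ysign (s : R) : option bool := if s == 0 then None else Some (0 < s).

Lemma ysign_alt (s s' : R) : s * s' < 0 -> ysign s != ysign s'.
Proof.
rewrite /ysign => h.
have s0 : s != 0 by apply: contraTneq h => ->; rewrite mul0r ltxx.
have s'0 : s' != 0 by apply: contraTneq h => ->; rewrite mulr0 ltxx.
rewrite (negbTE s0) (negbTE s'0); apply/eqP => -[].
case: (ltP 0 s) => a; case: (ltP 0 s') => b // _.
  by have := mulr_gt0 a b; lra.
have a' : s < 0 by rewrite lt_neqAle s0.
have b' : s' < 0 by rewrite lt_neqAle s'0.
have : 0 < s * s' by rewrite nmulr_rgt0.
lra.
Qed.

Lemma altX_ge n (t : nat -> R) L (X : signvec n) :
  altl t L -> all (fun i => i < n)%N L -> (forall j : 'I_n, X j = ysign (t j)) ->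
  (size L <= altX X)%N.
Proof.
move=> hL hn hX; case/and3P: (altl_props hL) => s1 s2 s3.
pose m : {ffun 'I_n -> bool} := [ffun j => val j \in L].
have eqL : [seq val j | j <- enum 'I_n & m j] = L.
  rewrite (@eq_filter _ _ (preim val (mem L))); last by move=> j; rewrite ffunE.
  rewrite -filter_map val_enum_ord; apply: (irr_sorted_eq ltn_trans ltnn) => //.
    by apply: sorted_filter => //; [exact: ltn_trans | exact: iota_ltn_sorted].
  move=> i; rewrite mem_filter /= mem_iota add0n /=.
  by case: (boolP (i \in L)) => //= /(allP hn) ->.
have eqX : [seq X i | i <- enum 'I_n & m i] = [seq ysign (t i) | i <- L].
  by rewrite -eqL -map_comp; apply: eq_map => j /=; rewrite hX.
rewrite /altX; apply: (leq_trans _ (leq_bigmax m)); rewrite /= eqX.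
have -> : Defs.alternating [seq ysign (t i) | i <- L].
  apply/andP; split.
    rewrite all_map; apply/allP => i /(allP s3) /= ti.
    by rewrite /ysign (negbTE ti).
  rewrite sorted_map; apply: sub_sorted s2 => i j /=; exact: ysign_alt.
by rewrite size_map.
Qed.
End Seqs.

Section Moment.
Variables (R : realType) (d : nat).
Local Notation M := 'rV[R]_d.+1.

Definition wv (i : nat) : M := \row_(k < d.+1) ((-1) ^+ i * (i%:R) ^+ k).
Definition cw (i : nat) : R := (Num.sqrt (inner (wv i) (wv i)))^-1.
Definition px (x : M) : {poly R} := \poly_(k < d.+1) x ord0 (inord k).

Lemma sign_sq (i : nat) : (-1) ^+ i * (-1) ^+ i = 1 :> R.
Proof. by rewrite -exprD addnn -muln2 exprM sqrr_sign. Qed.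

Lemma inner_wv x i : inner x (wv i) = tp (px x) i.
Proof.
rewrite /inner /tp /px horner_poly mulr_sumr; apply: eq_bigr => k _.
rewrite mxE inord_val; ring.
Qed.

Lemma inner_ge0 k (y : 'rV[R]_k) : 0 <= inner y y.
Proof. by apply: sumr_ge0 => i _; rewrite -expr2 sqr_ge0. Qed.

Lemma wv_pos i : 0 < inner (wv i) (wv i).
Proof.
rewrite /inner big_ord_recl mxE expr0 mulr1 sign_sq.
have : 0 <= \sum_(i0 < d) wv i ord0 (lift ord0 i0) * wv i ord0 (lift ord0 i0).
  by apply: sumr_ge0 => j _; rewrite -expr2 sqr_ge0.
lra.
Qed.

Lemma cw_pos i : 0 < cw i.
Proof. by rewrite /cw invr_gt0 sqrtr_gt0 wv_pos. Qed.

Lemma inner_scaler k (x y : 'rV[R]_k) c : inner x (c *: y) = c * inner x y.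
Proof. by rewrite /inner mulr_sumr; apply: eq_bigr => j _; rewrite mxE; ring. Qed.

Lemma inner_scalel k (x y : 'rV[R]_k) c : inner (c *: x) y = c * inner x y.
Proof. by rewrite /inner mulr_sumr; apply: eq_bigr => j _; rewrite mxE; ring. Qed.

Lemma sphere_cw i : @sphere R d (cw i *: wv i).
Proof.
rewrite /sphere /= inner_scaler inner_scalel mulrA -expr2 /cw exprVn sqr_sqrtr.
  by rewrite mulVf // gt_eqF // wv_pos.
exact: ltW (wv_pos i).
Qed.

Lemma px_neq0 x : @sphere R d x -> px x != 0.
Proof.
rewrite /sphere /= => hx; apply/eqP => p0.
have hk : forall k : 'I_d.+1, x ord0 k = 0.
  move=> k; have := congr1 (fun q : {poly R} => q`_k) p0.
  by rewrite /px coef_poly ltn_ord coef0 inord_val.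
move: hx; rewrite /inner big1 => [|k _]; last by rewrite hk mul0r.
by move/eqP; rewrite eq_sym oner_eq0.
Qed.

Lemma size_px x : (size (px x) <= d.+1)%N.
Proof. exact: size_poly. Qed.

End Moment.

Section Sigma.
Variables (R : realType) (V : finType) (E : {set {set V}}) (sig : ordering V)
  (g : V -> 'I_#|V|) (gK : cancel sig g) (d : nat).

Definition phiB (v : V) : 'rV[R]_d.+1 := @cw R d (g v) *: @wv R d (g v).
Definition sv (x : 'rV[R]_d.+1) : signvec #|V| :=
  [ffun j : 'I_#|V| => ysign (@cw R d j * tp (px x) j)].

Lemma inner_phiB x j : inner x (phiB (sig j)) = @cw R d j * tp (px x) j.
Proof. by rewrite /phiB gK inner_scaler inner_wv. Qed.

Lemma altX_sv x : @sphere R d x -> (#|V| <= altX (sv x) + d)%N.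
Proof.
move=> hx.
have [L /and3P[h1 h2 h3]] := poly_alt #|V| (size_px x) (px_neq0 hx).
have := altX_ge (altl_scale (@cw_pos R d) h1) h2 (X := sv x) (fun j => ffunE _ _).
have : ((size (px x)).-1 <= d)%N by have := size_px x; case: (size _).
move=> hP hA; apply: (leq_trans h3); exact: leq_add.
Qed.

Lemma hits_plus x : (0 < #|induced_edges E (sig @: Xplus (sv x))|)%N -> hits E phiB x.
Proof.
rewrite card_gt0 => /set0Pn [e]; rewrite inE => /andP[he sub].
exists e => // v /(fintype.subsetP sub) /imsetP [j]; rewrite inE ffunE => hj ->.
rewrite /hemi inner_phiB; move: hj; rewrite /ysign.
by case: ifP => //= _; case: (0 < _).
Qed.

Lemma hits_minus x : (0 < #|induced_edges E (sig @: Xminus (sv x))|)%N -> hits E phiB (- x).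
Proof.
rewrite card_gt0 => /set0Pn [e]; rewrite inE => /andP[he sub].
exists e => // v /(fintype.subsetP sub) /imsetP [j]; rewrite inE ffunE => hj ->.
rewrite /hemi inner_oppl inner_phiB oppr_gt0; move: hj; rewrite /ysign.
case: ifP => //= /negbT h0; case: ltrgt0P => //= h _.
by rewrite h eqxx in h0.
Qed.

Lemma sphere_phiB v : @sphere R d (phiB v).
Proof. exact: sphere_cw. Qed.

Lemma dimB : (alt_sigma E sig + d.+1 <= #|V|)%N -> dim_admissible R E d.
Proof.
move=> hn; exists phiB; split; first exact: sphere_phiB.
move=> x hx; have := altX_sv hx => ha.
case: (posnP #|induced_edges E (sig @: Xplus (sv x))|) => hp; last by left; exact: hits_plus.
case: (posnP #|induced_edges E (sig @: Xminus (sv x))|) => hm; last by right; exact: hits_minus.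
have : (altX (sv x) <= alt_sigma E sig)%N.
  by apply: leq_bigmax_cond; rewrite hp hm.
lia.
Qed.

Lemma sdimB : (salt_sigma E sig + d.+1 <= #|V|)%N -> sdim_admissible R E d.
Proof.
move=> hn; exists phiB; split; first exact: sphere_phiB.
move=> x hx; have := altX_sv hx => ha.
case: (posnP #|induced_edges E (sig @: Xplus (sv x))|) => hp.
  have : (altX (sv x) <= salt_sigma E sig)%N by apply: leq_bigmax_cond; rewrite hp min0n.
  lia.
case: (posnP #|induced_edges E (sig @: Xminus (sv x))|) => hm.
  have : (altX (sv x) <= salt_sigma E sig)%N by apply: leq_bigmax_cond; rewrite hm minn0.
  lia.
by split; [exact: hits_plus | exact: hits_minus].
Qed.
End Sigma.

Lemma big_minn_cases (V : finType) (F : ordering V -> nat) :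
  \big[minn/#|V|]_(s : ordering V | injectiveb s) F s = #|V| \/
  exists s : ordering V, injectiveb s /\ \big[minn/#|V|]_(s : ordering V | injectiveb s) F s = F s.
Proof.
apply: (big_ind (fun m => m = #|V| \/ exists s : ordering V, injectiveb s /\ m = F s)).
- by left.
- move=> a b ha hb /=; case: (leqP a b) => h.
    by [].
  by [].
- by move=> s hs; right; exists s.
Qed.

Lemma get_inv (V : finType) (s : ordering V) : injectiveb s ->
  exists g : V -> 'I_#|V|, cancel s g.
Proof.
move/injectiveP => inj.
have [|g gK _] := inj_card_bij inj; first by rewrite card_ord.
by exists g.
Qed.

Unset Implicit Arguments.

Theorem corollary2 (R : realType) (V : finType) (E : {set {set V}})
  (HV : (0 < #|V|)%N) (HE : finset.set0 \notin E) :
  (* (a) coind(B_0(KG H)) >= dim H >= |V| - alt H - 1 *)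
  ((forall d : nat, dim_admissible R E d -> coind_ge R (B0 (@KGadj V E)) d) /\
   ((#|V|%:Z - (alt E)%:Z - 1 <= -1)%R \/
    exists d : nat, (#|V|%:Z - (alt E)%:Z - 1 <= d%:Z)%R /\ dim_admissible R E d)) /\
  (* (b) coind(B(KG H)) >= sdim H >= |V| - salt H - 1 *)
  ((forall d : nat, sdim_admissible R E d -> coind_ge R (Bc (@KGadj V E)) d) /\
   ((#|V|%:Z - (salt E)%:Z - 1 <= -1)%R \/
    exists d : nat, (#|V|%:Z - (salt E)%:Z - 1 <= d%:Z)%R /\ sdim_admissible R E d)).
Proof.
split; split.
- move=> d [phi [_ H]]; exists d; split => //; exists (@fmapKG R V E d phi).
  exact: equiv_B0.
- case: (leqP #|V| (alt E)) => h; first by left; lia.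
  right; case: (@big_minn_cases V (alt_sigma E)) => [h'|[s [hs h']]].
    by move: h; rewrite /alt h' ltnn.
  have [g gK] := @get_inv V s hs.
  exists (#|V| - (alt E).+1)%N; split; first lia.
  apply: (dimB R gK); rewrite -/(alt E) in h'; rewrite -h'; lia.
- move=> d [phi [_ H]]; exists d; split => //; exists (@fmapKG R V E d phi).
  exact: equiv_Bc.
- case: (leqP #|V| (salt E)) => h; first by left; lia.
  right; case: (@big_minn_cases V (salt_sigma E)) => [h'|[s [hs h']]].
    by move: h; rewrite /salt h' ltnn.
  have [g gK] := @get_inv V s hs.
  exists (#|V| - (salt E).+1)%N; split; first lia.
  apply: (sdimB R gK); rewrite -/(salt E) in h'; rewrite -h'; lia.
Qed.
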